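(* Let $\alpha\ge 0$ and $p>1$ be constants, and let $n$ be an integer with \[ n\ge 2+\frac{2(\alpha+2)}{p+1}\left(p+\sqrt{p^2+p}\right). \] Then the solution curve of the MEMS problem \[ u''+\frac{n-1}{r}u'+\lambda\frac{r^{\alpha}}{(1-u)^p}=0 \quad (0<r<1),\qquad u'(0)=0,\quad u(1)=0, \] admits at most two turns. That is, with $w$ and $\lambda(t)$ as in the context, $\lambda'(t)$ changes sign at most twice on $(0,\infty)$.
   Context: Here $\lambda>0$ is a parameter, and solutions are required to satisfy $0<u(r)<1$. Let $w(t)$ be the solution of \[ w''+\frac{n-1}{t}w'=\frac{t^{\alpha}}{w^p},\qquad w(0)=1,\quad w'(0)=0 \qquad (t>0). \] This solution is positive and increasing and is defined for all $t>0$. For each $t>0$, the function $u(r)=1-w(tr)/w(t)$ solves the problem with $\lambda=\lambda(t):=t^{\alpha+2}/w(t)^{p+1}$, and all solutions arise this way. The solution curve is \[ t\mapsto(\lambda,u(0))=\bigl(t^{\alpha+2}/w(t)^{p+1},\,1-1/w(t)\bigr), \qquad t\in(0,\infty). \] A turn of the curve is a change of sign of $\lambda'(t)$. *)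

(* Defs.v *)
From Stdlib Require Import Reals.
From Coquelicot Require Import Coquelicot.
Open Scope R_scope.

(* w solves  w'' + (n-1)/t w' = t^alpha / w^p  on (0,oo), w(0)=1, w'(0)=0,
   with w' = dw, w'' = ddw; w is positive (required for w^p to make sense). *)
Definition is_mems_w (n : nat) (alpha p : R) (w dw ddw : R -> R) : Prop :=
  w 0 = 1 /\
  (forall t, 0 <= t -> 0 < w t) /\
  filterlim w (at_right 0) (locally 1) /\
  filterlim dw (at_right 0) (locally 0) /\
  (forall t, 0 < t -> is_derive w t (dw t)) /\
  (forall t, 0 < t -> is_derive dw t (ddw t)) /\
  (forall t, 0 < t ->
     ddw t + (INR n - 1) / t * dw t = Rpower t alpha / Rpower (w t) p).

Definition mems_lambda (alpha p : R) (w : R -> R) (t : R) : R :=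
  Rpower t (alpha + 2) / Rpower (w t) (p + 1).

Definition at_most_two_sign_changes (f : R -> R) : Prop :=
  ~ exists t1 t2 t3 t4 : R,
      0 < t1 /\ t1 < t2 /\ t2 < t3 /\ t3 < t4 /\
      f t1 * f t2 < 0 /\ f t2 * f t3 < 0 /\ f t3 * f t4 < 0.

(* Main.v *)
Require Import Defs.
From Stdlib Require Import Reals Lra Classical.
From Coquelicot Require Import Coquelicot.
Open Scope R_scope.

Lemma D_mult (f g : R -> R) (x df dg : R) : is_derive f x df -> is_derive g x dg ->
  is_derive (fun t => f t * g t) x (df * g x + f x * dg).
Proof. intros H1 H2. apply (is_derive_mult f g x df dg); auto. intros; apply Rmult_comm. Qed.
Lemma D_plus (f g : R -> R) (x df dg : R) : is_derive f x df -> is_derive g x dg ->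
  is_derive (fun t => f t + g t) x (df + dg).
Proof. intros H1 H2. apply (@is_derive_plus R_AbsRing R_NormedModule f g x df dg); auto. Qed.
Lemma D_minus (f g : R -> R) (x df dg : R) : is_derive f x df -> is_derive g x dg ->
  is_derive (fun t => f t - g t) x (df - dg).
Proof. intros H1 H2. apply (@is_derive_minus R_AbsRing R_NormedModule f g x df dg); auto. Qed.
Lemma D_eq (f : R -> R) (x l l' : R) : is_derive f x l -> l = l' -> is_derive f x l'.
Proof. intros H ->; exact H. Qed.

Lemma D_Rpower g t : 0 < t -> is_derive (fun t => Rpower t g) t (g * Rpower t g / t).
Proof.
  intros Ht. apply is_derive_Reals.
  replace (g * Rpower t g / t) with (g * Rpower t (g - 1)).
  - apply derivable_pt_lim_power; auto.
  - unfold Rpower. replace ((g - 1) * ln t) with (g * ln t + - ln t) by ring.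
    rewrite exp_plus, exp_Ropp, exp_ln by auto. field. lra.
Qed.

Lemma local_sign (g : R -> R) (c l : R) : is_derive g c l -> 0 < l ->
  exists d, 0 < d /\ forall h, 0 < h < d -> g (c + h) > g c /\ g (c - h) < g c.
Proof.
  intros H Hl. apply is_derive_Reals in H.
  destruct (H l Hl) as [del Hd].
  exists del. split. apply cond_pos.
  intros h [h0 h1]. split.
  - assert (A := Hd h ltac:(lra) ltac:(rewrite Rabs_pos_eq; lra)).
    apply Rabs_def2 in A. destruct A as [A1 A2].
    assert (0 < (g (c + h) - g c) / h) by lra.
    assert (0 < (g (c+h) - g c)). { replace (g (c+h) - g c) with (((g (c + h) - g c) / h) * h) by (field; lra).
      apply Rmult_lt_0_compat; lra. } lra.
  - assert (A := Hd (-h) ltac:(lra) ltac:(rewrite Rabs_left; lra)).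
    apply Rabs_def2 in A. destruct A as [A1 A2].
    replace (c + - h) with (c - h) in A1, A2 by ring.
    assert (0 < (g (c - h) - g c) / - h) by lra.
    assert (0 < - (g (c-h) - g c)). { replace (- (g (c-h) - g c)) with (((g (c - h) - g c) / - h) * h) by (field; lra).
      apply Rmult_lt_0_compat; lra. } lra.
Qed.

Lemma cont_nb g c eps : continuity_pt g c -> 0 < eps ->
  exists d, 0 < d /\ forall t, Rabs (t - c) < d -> Rabs (g t - g c) < eps.
Proof.
  intros H He. destruct (H eps He) as [d [Hd Hd2]].
  exists d. split; auto. intros t Ht.
  destruct (Req_dec t c) as [->|Hne].
  - rewrite Rminus_diag, Rabs_R0; auto.
  - apply (Hd2 t). split. split. exact I. auto. exact Ht.
Qed.

Lemma deriv_cont (g : R -> R) (t l : R) : is_derive g t l -> continuity_pt g t.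
Proof.
  intros H. apply continuity_pt_filterlim. apply (@ex_derive_continuous R_AbsRing R_NormedModule). exists l; auto.
Qed.

Lemma cross_down (g d : R -> R) (x y : R) : x < y ->
  (forall t, x <= t <= y -> is_derive g t (d t)) -> g x > 0 -> g y < 0 ->
  exists c, x < c < y /\ g c = 0 /\ d c <= 0.
Proof.
  intros Hxy Hd Hx Hy.
  set (E := fun t => x <= t <= y /\ g t >= 0).
  assert (Hb : bound E). { exists y. intros t [[_ Ht] _]. auto. }
  assert (Hne : exists t, E t). { exists x. split; lra. }
  destruct (completeness E Hb Hne) as [c [Hub Hlub]].
  assert (Hxc : x <= c). { apply Hub. split; lra. }
  assert (Hcy : c <= y). { apply Hlub. intros t [[_ Ht] _]. auto. }
  assert (Hcont : continuity_pt g c) by (apply (deriv_cont g c (d c)); apply Hd; lra).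
  assert (G1 : g c >= 0).
  { destruct (Rge_or_gt (g c) 0) as [?|Hlt]; auto. exfalso.
    destruct (cont_nb g c (- g c) Hcont ltac:(lra)) as [del [Hdel Hn]].
    assert (~ is_upper_bound E (c - del)).
    { intros Hu. assert (c <= c - del) by (apply Hlub; auto). lra. }
    apply not_all_ex_not in H. destruct H as [s Hs].
    apply imply_to_and in Hs. destruct Hs as [Es Hs].
    assert (Hsc : s <= c) by (apply Hub; auto).
    destruct Es as [_ Es].
    assert (Hsd : Rabs (s - c) < del) by (rewrite Rabs_left1; lra).
    specialize (Hn s Hsd). apply Rabs_def2 in Hn. lra. }
  assert (G2 : g c <= 0).
  { destruct (Rle_or_lt (g c) 0) as [?|Hlt]; auto. exfalso.
    assert (c <> y) by (intro; subst; lra).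
    destruct (cont_nb g c (g c) Hcont ltac:(lra)) as [del [Hdel Hn]].
    set (t := Rmin (c + del/2) y).
    assert (c < t). { unfold t. apply Rmin_case; lra. }
    assert (t <= c + del/2) by apply Rmin_l.
    assert (t <= y) by apply Rmin_r.
    assert (Htd : Rabs (t - c) < del) by (rewrite Rabs_pos_eq; lra).
    specialize (Hn t Htd). apply Rabs_def2 in Hn.
    assert (t <= c) by (apply Hub; split; lra). lra. }
  assert (Hc0 : g c = 0) by lra.
  assert (x < c) by (destruct Hxc; auto; subst; lra).
  assert (c < y) by (destruct Hcy; auto; subst; lra).
  exists c. split. lra. split. auto.
  destruct (Rle_or_lt (d c) 0) as [?|Hdp]; auto. exfalso.
  destruct (local_sign g c (d c) (Hd c ltac:(lra)) Hdp) as [del [Hdel Hs]].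
  set (h := Rmin (del/2) ((y - c)/2)).
  assert (0 < h) by (unfold h; apply Rmin_case; lra).
  assert (h <= del/2) by apply Rmin_l. assert (h <= (y-c)/2) by apply Rmin_r.
  destruct (Hs h ltac:(lra)) as [Hs1 _].
  assert (c + h <= c) by (apply Hub; split; lra). lra.
Qed.

Lemma cross_up (g d : R -> R) (x y : R) : x < y ->
  (forall t, x <= t <= y -> is_derive g t (d t)) -> g x < 0 -> g y > 0 ->
  exists c, x < c < y /\ g c = 0 /\ d c >= 0.
Proof.
  intros Hxy Hd Hx Hy.
  destruct (cross_down (fun t => - g t) (fun t => - d t) x y Hxy) as [c [H1 [H2 H3]]].
  - intros t Ht. apply (is_derive_opp g t (d t)). auto.
  - lra. - lra.
  - exists c. split; auto. split; lra.
Qed.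

Lemma mono (g d : R -> R) (x y : R) : x <= y ->
  (forall t, x <= t <= y -> is_derive g t (d t)) -> (forall t, x <= t <= y -> 0 <= d t) ->
  g x <= g y.
Proof.
  intros Hxy Hd Hp.
  destruct (MVT_gen g x y d) as [c [Hc He]].
  - intros t. rewrite Rmin_left, Rmax_right by lra. intros; apply Hd; lra.
  - intros t. rewrite Rmin_left, Rmax_right by lra. intros; apply (deriv_cont g t (d t)); apply Hd; lra.
  - rewrite Rmin_left, Rmax_right in Hc by lra.
    assert (0 <= d c * (y - x)) by (apply Rmult_le_pos; [apply Hp; lra| lra]). lra.
Qed.

Lemma Rpower_pos x y : 0 < Rpower x y.
Proof. unfold Rpower. apply exp_pos. Qed.

Lemma D_Rpow_mul (g : R) (F : R -> R) (dF t : R) : 0 < t -> is_derive F t dF ->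
  is_derive (fun t => Rpower t g * F t) t (Rpower t g / t * (g * F t + t * dF)).
Proof.
  intros Ht HF. eapply D_eq. apply (D_mult (fun t => Rpower t g) F). apply D_Rpower; auto. exact HF.
  field. lra.
Qed.

Lemma core (a c k vs : R) (F U V : R -> R) :
  0 < k -> 0 < c -> k * k - a * k + c = 0 ->
  (forall v, 0 < v -> F v >= - c * (v - vs)) ->
  (forall v, 0 < v -> vs < v -> F v < 0) ->
  (forall t, 0 < t -> 0 < V t) ->
  (forall t, 0 < t -> is_derive V t (U t / t)) ->
  (forall t, 0 < t -> is_derive U t ((F (V t) - a * U t) / t)) ->
  forall r1 r2 r3, 0 < r1 -> r1 < r2 -> r2 < r3 -> U r1 > 0 -> U r2 < 0 -> U r3 > 0 -> False.
Proof.
  intros Hk Hc Hkc Fconv Fneg Vpos DV DU r1 r2 r3 H1 H12 H23 U1 U2 U3.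
  destruct (cross_down U (fun t => (F (V t) - a * U t) / t) r1 r2 H12) as [c1 [Hc1 [Uc1 Dc1]]].
  { intros t Ht; apply DU; lra. } lra. lra.
  destruct (cross_up U (fun t => (F (V t) - a * U t) / t) r2 r3 H23) as [c3 [Hc3 [Uc3 Dc3]]].
  { intros t Ht; apply DU; lra. } lra. lra.
  rewrite Uc1 in Dc1. rewrite Uc3 in Dc3.
  assert (F1 : F (V c1) <= 0).
  { replace (F (V c1)) with (((F (V c1) - a * 0) / c1) * c1) by (field; lra).
    assert (0 <= - ((F (V c1) - a * 0) / c1) * c1) by (apply Rmult_le_pos; lra). lra. }
  assert (F3 : F (V c3) >= 0).
  { replace (F (V c3)) with (((F (V c3) - a * 0) / c3) * c3) by (field; lra).
    assert (0 <= ((F (V c3) - a * 0) / c3) * c3) by (apply Rmult_le_pos; lra). lra. }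
  assert (X1 : V c1 >= vs).
  { destruct (Rge_or_gt (V c1) vs) as [?|Hl]; auto.
    assert (HF := Fconv (V c1) (Vpos c1 ltac:(lra))).
    assert (0 < c * (vs - V c1)) by (apply Rmult_lt_0_compat; lra). nra. }
  assert (X3 : V c3 <= vs).
  { destruct (Rle_or_lt (V c3) vs) as [?|Hl]; auto.
    assert (HF := Fneg (V c3) (Vpos c3 ltac:(lra)) Hl). lra. }
  set (Y := fun t => U t + k * (V t - vs)).
  set (H := fun t => Rpower t (a - k) * Y t).
  assert (DY : forall t, 0 < t -> is_derive Y t ((F (V t) - a * U t) / t + k * (U t / t))).
  { intros t Ht. unfold Y. apply D_plus. apply DU; auto.
    apply is_derive_scal. eapply D_eq. apply D_minus. apply DV; auto. apply (is_derive_const vs).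
    simpl. unfold zero; simpl. ring. }
  assert (Hmono : forall x y, 0 < x -> x <= y -> H x <= H y).
  { intros x y Hx Hxy.
    apply (mono H (fun t => Rpower t (a - k) / t * ((a - k) * Y t + t * ((F (V t) - a * U t) / t + k * (U t / t))))); auto.
    - intros t Ht. unfold H. apply D_Rpow_mul. lra. apply DY; lra.
    - intros t Ht. apply Rmult_le_pos.
      + apply Rlt_le. apply Rdiv_lt_0_compat. apply Rpower_pos. lra.
      + replace ((a - k) * Y t + t * ((F (V t) - a * U t) / t + k * (U t / t)))
          with (F (V t) + c * (V t - vs)).
        * assert (HF := Fconv (V t) (Vpos t ltac:(lra))). lra.
        * unfold Y. replace c with (a * k - k * k) by lra. field. lra. }
  assert (Hc1p : 0 <= H c1).
  { unfold H, Y. rewrite Uc1. apply Rmult_le_pos. apply Rlt_le, Rpower_pos.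
    rewrite Rplus_0_l. apply Rmult_le_pos; lra. }
  assert (Hc3n : H c3 <= 0).
  { unfold H, Y. rewrite Uc3. 
    assert (0 <= Rpower c3 (a - k) * (- (0 + k * (V c3 - vs)))).
    { apply Rmult_le_pos. apply Rlt_le, Rpower_pos. 
      assert (0 <= k * (vs - V c3)) by (apply Rmult_le_pos; lra). lra. }
    lra. }
  assert (Yz : forall t, c1 <= t <= c3 -> Y t = 0).
  { intros t Ht. assert (H c1 <= H t) by (apply Hmono; lra).
    assert (H t <= H c3) by (apply Hmono; lra).
    assert (Ht0 : H t = 0) by lra. unfold H in Ht0.
    apply Rmult_integral in Ht0. destruct Ht0 as [Hz|Hz]; auto.
    pose proof (Rpower_pos t (a - k)); lra. }
  set (G := fun t => Rpower t k * (V t - vs)).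
  assert (Geq : G r2 = G c3).
  { assert (DG : forall t, r2 <= t <= c3 -> is_derive G t 0).
    { intros t Ht. unfold G. eapply D_eq. apply D_Rpow_mul. lra.
      eapply D_eq. apply D_minus. apply DV; lra. apply (is_derive_const vs).
      reflexivity. simpl. unfold zero; simpl.
      assert (Yt := Yz t ltac:(lra)). unfold Y in Yt.
      replace (k * (V t - vs) + t * (U t / t - 0)) with (U t + k * (V t - vs)) by (field; lra).
      rewrite Yt. ring. }
    assert (G r2 <= G c3). { apply (mono G (fun _ => 0)). lra. exact DG. intros; lra. }
    assert (- G r2 <= - G c3).
    { apply (mono (fun t => - G t) (fun _ => 0)). lra.
      intros t Ht. eapply D_eq. apply (is_derive_opp G t 0). auto. simpl. unfold opp; simpl. ring.
      intros; lra. }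
    lra. }
  assert (Gc3 : G c3 = 0).
  { unfold G. assert (Yc := Yz c3 ltac:(lra)). unfold Y in Yc. rewrite Uc3 in Yc.
    assert (k * (V c3 - vs) = 0) by lra.
    apply Rmult_integral in H0. destruct H0; [lra|]. rewrite H0. ring. }
  rewrite Gc3 in Geq. unfold G in Geq. apply Rmult_integral in Geq.
  destruct Geq as [Hz|Hz]. pose proof (Rpower_pos r2 k); lra.
  assert (Yr := Yz r2 ltac:(lra)). unfold Y in Yr. rewrite Hz in Yr. lra.
Qed.

Lemma D_comp (f g : R -> R) (x df dg : R) : is_derive f (g x) df -> is_derive g x dg ->
  is_derive (fun t => f (g t)) x (dg * df).
Proof. intros H1 H2. apply (@is_derive_comp R_AbsRing R_NormedModule f g x df dg); auto. Qed.

Lemma Fconv_lem (p b v : R) : 1 < p -> 0 < b -> 0 < v ->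
  Rpower v (-p) - b * v >= - ((p + 1) * b) * (v - exp (- ln b / (p + 1))).
Proof.
  intros Hp Hb Hv.
  set (q := ln b). set (L := ln v).
  set (Z := q * p / (p + 1)). set (u := L + q / (p + 1)).
  assert (Eb : b = exp q) by (unfold q; rewrite exp_ln; auto).
  assert (Ev : v = exp L) by (unfold L; rewrite exp_ln; auto).
  assert (E1 : Rpower v (-p) = exp Z * exp (- p * u)).
  { unfold Rpower. rewrite <- exp_plus. f_equal. fold L. unfold Z, u. field. lra. }
  assert (E2 : b * v = exp Z * exp u).
  { rewrite Eb, Ev, <- !exp_plus. f_equal. unfold Z, u. field. lra. }
  assert (E3 : b * exp (- q / (p + 1)) = exp Z).
  { rewrite Eb at 1. rewrite <- exp_plus. f_equal. unfold Z. field. lra. }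
  assert (I1 := exp_ineq1_le (- p * u)).
  assert (I2 := exp_ineq1_le u).
  assert (Hz := exp_pos Z).
  assert (S : 0 <= exp (- p * u) + p * exp u - (p + 1)).
  { assert (0 <= p * (exp u - 1 - u)) by (apply Rmult_le_pos; lra). nra. }
  assert (0 <= exp Z * (exp (- p * u) + p * exp u - (p + 1))) by (apply Rmult_le_pos; lra).
  replace (- ((p + 1) * b) * (v - exp (- q / (p + 1)))) with
     (- (p+1) * (b * v) + (p + 1) * (b * exp (- q / (p + 1)))) by ring.
  rewrite E1, E2, E3. nra.
Qed.

Lemma Fneg_lem (p b v : R) : 1 < p -> 0 < b -> 0 < v -> exp (- ln b / (p + 1)) < v ->
  Rpower v (-p) - b * v < 0.
Proof.
  intros Hp Hb Hv Hlt.
  set (vs := exp (- ln b / (p + 1))) in *.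
  assert (Hvs : 0 < vs) by apply exp_pos.
  assert (E3 : b * vs = exp (- p * ln vs)).
  { unfold vs. rewrite ln_exp. rewrite <- (exp_ln b) at 1 by auto. rewrite <- exp_plus. f_equal. field. lra. }
  assert (Hl : ln vs < ln v) by (apply ln_increasing; auto).
  assert (exp (- p * ln v) < exp (- p * ln vs)) by (apply exp_increasing; nra).
  unfold Rpower. assert (b * vs < b * v) by (apply Rmult_lt_compat_l; auto). lra.
Qed.

Lemma key_id (alpha p t wt : R) : 0 < t -> 0 < wt -> 1 < p ->
  Rpower (wt / Rpower t ((alpha + 2) / (p + 1))) (- p) =
  t * t * Rpower t alpha / Rpower wt p / Rpower t ((alpha + 2) / (p + 1)).
Proof.
  intros Ht Hw Hp. unfold Rpower.
  rewrite ln_div by (auto; apply exp_pos). rewrite ln_exp.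
  set (L := ln t). set (lw := ln wt).
  assert (Et : t = exp L) by (unfold L; rewrite exp_ln; auto).
  rewrite Et at 1 2.
  replace (exp L * exp L * exp (alpha * L) / exp (p * lw) / exp ((alpha + 2) / (p + 1) * L))
    with (exp (L + L + alpha * L + - (p * lw) + - ((alpha + 2) / (p + 1) * L))).
  - f_equal. field. lra.
  - rewrite !exp_plus, !exp_Ropp. field. split; apply Rgt_not_eq, exp_pos.
Qed.

Theorem theorem4p2 (alpha p : R) (n : nat) (w dw ddw : R -> R) :
  0 <= alpha -> 1 < p ->
  2 + 2 * (alpha + 2) / (p + 1) * (p + sqrt (p ^ 2 + p)) <= INR n ->
  is_mems_w n alpha p w dw ddw ->
  at_most_two_sign_changes (fun t => Derive (mems_lambda alpha p w) t).
Proof.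
  intros Ha Hp Hn Hw.
  destruct Hw as [_ [Hwpos [_ [_ [Hdw [Hddw Hode]]]]]].
  set (bt := (alpha + 2) / (p + 1)).
  assert (Hbt : 0 < bt) by (unfold bt; apply Rdiv_lt_0_compat; lra).
  set (nn := INR n) in *.
  set (r := sqrt (p ^ 2 + p)) in *.
  assert (Hr0 : 0 <= r) by apply sqrt_pos.
  assert (Hr2 : r * r = p ^ 2 + p) by (apply sqrt_sqrt; nra).
  assert (Hm : 2 * bt * (p + r) <= nn - 2).
  { replace (2 * bt * (p + r)) with (2 * (alpha + 2) / (p + 1) * (p + r)) by (unfold bt; field; lra). lra. }
  set (a := 2 * bt + nn - 2).
  set (b := bt * (bt + nn - 2)).
  set (c := (p + 1) * b).
  set (D := a * a - 4 * c).
  assert (Hb : 0 < b). { unfold b. apply Rmult_lt_0_compat; auto. nra. }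
  assert (Hc : 0 < c) by (unfold c; nra).
  assert (HD : 0 <= D).
  { unfold D, a, c, b.
    assert (0 <= 2 * bt * r) by nra.
    assert (2 * bt * r <= nn - 2 - 2 * bt * p) by lra.
    assert ((2 * bt * r) * (2 * bt * r) <= (nn - 2 - 2 * bt * p) * (nn - 2 - 2 * bt * p)) by nra.
    nra. }
  set (k := (a + sqrt D) / 2).
  assert (HsD : sqrt D * sqrt D = D) by (apply sqrt_sqrt; auto).
  assert (Ha0 : 0 < a) by (unfold a; nra).
  assert (Hk : 0 < k) by (unfold k; pose proof (sqrt_pos D); lra).
  assert (Hkc : k * k - a * k + c = 0).
  { unfold k. replace ((a + sqrt D) / 2 * ((a + sqrt D) / 2) - a * ((a + sqrt D) / 2) + c)
      with ((sqrt D * sqrt D - a * a) / 4 + c) by field.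
    rewrite HsD. unfold D. field. }
  set (vs := exp (- ln b / (p + 1))).
  set (F := fun v => Rpower v (- p) - b * v).
  set (V := fun t => w t / Rpower t bt).
  set (U := fun t => (t * dw t - bt * w t) / Rpower t bt).
  assert (Vpos : forall t, 0 < t -> 0 < V t).
  { intros t Ht. unfold V. apply Rdiv_lt_0_compat. apply Hwpos; lra. apply Rpower_pos. }
  assert (DV : forall t, 0 < t -> is_derive V t (U t / t)).
  { intros t Ht. unfold V. eapply D_eq. apply is_derive_div. apply Hdw; auto. apply D_Rpower; auto.
    apply Rgt_not_eq, Rpower_pos.
    unfold U. pose proof (Rpower_pos t bt). field. lra. }
  assert (DU : forall t, 0 < t -> is_derive U t ((F (V t) - a * U t) / t)).
  { intros t Ht. unfold U. eapply D_eq. apply is_derive_div.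
    apply D_minus. apply D_mult. apply (is_derive_id t). apply Hddw; auto.
    apply is_derive_scal. apply Hdw; auto.
    apply D_Rpower; auto. apply Rgt_not_eq, Rpower_pos.
    assert (Hwt : 0 < w t) by (apply Hwpos; lra).
    assert (Ho := Hode t Ht).
    replace (ddw t) with (Rpower t alpha / Rpower (w t) p - (nn - 1) / t * dw t) by lra.
    unfold F, V. unfold bt. rewrite key_id by auto. fold bt.
    simpl. unfold one; simpl.
    pose proof (Rpower_pos t bt). pose proof (Rpower_pos (w t) p).
    unfold a, b. field. lra. }
  assert (DL : forall t, 0 < t -> Derive (mems_lambda alpha p w) t =
     - (Rpower t (alpha + 2) / Rpower (w t) (p + 1) * (p + 1) * Rpower t bt / (t * w t)) * U t).
  { intros t Ht. apply is_derive_unique. unfold mems_lambda.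
    assert (Hwt : 0 < w t) by (apply Hwpos; lra).
    eapply D_eq. apply is_derive_div. apply D_Rpower; auto.
    apply (D_comp (fun y => Rpower y (p + 1)) w). apply D_Rpower; auto. apply Hdw; auto.
    apply Rgt_not_eq, Rpower_pos.
    unfold U. pose proof (Rpower_pos t bt). pose proof (Rpower_pos (w t) (p+1)).
    pose proof (Rpower_pos t (alpha + 2)).
    replace (alpha + 2) with (bt * (p + 1)) at 1 by (unfold bt; field; lra).
    field. repeat split; lra. }
  assert (Kpos : forall t, 0 < t ->
     0 < Rpower t (alpha + 2) / Rpower (w t) (p + 1) * (p + 1) * Rpower t bt / (t * w t)).
  { intros t Ht. assert (Hwt : 0 < w t) by (apply Hwpos; lra).
    pose proof (Rpower_pos t bt). pose proof (Rpower_pos (w t) (p+1)).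
    pose proof (Rpower_pos t (alpha + 2)).
    apply Rdiv_lt_0_compat. apply Rmult_lt_0_compat. apply Rmult_lt_0_compat.
    apply Rdiv_lt_0_compat; auto. lra. auto. nra. }
  assert (Core := core a c k vs F U V Hk Hc Hkc
     (fun v Hv => Fconv_lem p b v Hp Hb Hv)
     (fun v Hv Hlt => Fneg_lem p b v Hp Hb Hv Hlt) Vpos DV DU).
  intros [t1 [t2 [t3 [t4 [H1 [H12 [H23 [H34 [P12 [P23 P34]]]]]]]]]].
  assert (Prod : forall x y, 0 < x -> 0 < y ->
     Derive (mems_lambda alpha p w) x * Derive (mems_lambda alpha p w) y < 0 -> U x * U y < 0).
  { intros x y Hx Hy Hxy. rewrite (DL x Hx), (DL y Hy) in Hxy.
    pose proof (Kpos x Hx). pose proof (Kpos y Hy).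
    set (Kx := Rpower x (alpha + 2) / Rpower (w x) (p + 1) * (p + 1) * Rpower x bt / (x * w x)) in *.
    set (Ky := Rpower y (alpha + 2) / Rpower (w y) (p + 1) * (p + 1) * Rpower y bt / (y * w y)) in *.
    replace (- Kx * U x * (- Ky * U y)) with ((Kx * Ky) * (U x * U y)) in Hxy by ring.
    destruct (Rlt_or_le (U x * U y) 0) as [?|Hge]; auto.
    assert (0 <= (Kx * Ky) * (U x * U y)) by (apply Rmult_le_pos; nra). lra. }
  simpl in P12, P23, P34.
  assert (Q12 := Prod t1 t2 ltac:(lra) ltac:(lra) P12).
  assert (Q23 := Prod t2 t3 ltac:(lra) ltac:(lra) P23).
  assert (Q34 := Prod t3 t4 ltac:(lra) ltac:(lra) P34).
  destruct (Rlt_or_le 0 (U t1)) as [Hu1|Hu1].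
  - assert (U t2 < 0) by nra. assert (U t3 > 0) by nra.
    apply (Core t1 t2 t3); lra.
  - assert (U t1 < 0). { destruct Hu1; auto. rewrite H in Q12. lra. }
    assert (U t2 > 0) by nra. assert (U t3 < 0) by nra. assert (U t4 > 0) by nra.
    apply (Core t2 t3 t4); lra.
Qed.
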